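(* Let $\mathbb{X}$ and $\mathbb{Y}$ be semi-abelian categories and let $I\colon \mathbb{X}\to\mathbb{Y}$ be a full and faithful protoadditive functor with a right adjoint $R\colon\mathbb{Y}\to\mathbb{X}$. If $\mathbb{Y}$ has generic split extensions (i.e. is action representable), then so does $\mathbb{X}$.
   Context: Semi-abelian: pointed, finitely complete and cocomplete, Barr-exact, Bourn-protomodular. A split extension is a diagram $X\xrightarrow{\kappa}A\rightleftarrows B$ with $\alpha\colon A\to B$, $\beta\colon B\to A$, $\alpha\beta=1_B$ and $\kappa$ a kernel of $\alpha$. A generic split extension with kernel $X$ is a split extension with kernel $X$ to which every split extension with kernel $X$ admits a unique morphism of split extensions that is the identity on $X$; a category has generic split extensions if one exists for every object $X$. A functor between pointed categories is protoadditive if it preserves split short exact sequences (split extensions). *)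

(* Defs.v *)
Record Category : Type := {
  Obj :> Type;
  Hom : Obj -> Obj -> Type;
  comp : forall x y z : Obj, Hom y z -> Hom x y -> Hom x z;
  idm : forall a : Obj, Hom a a;
  comp_assoc : forall a b c d (h : Hom c d) (g : Hom b c) (f : Hom a b),
      comp a c d h (comp a b c g f) = comp a b d (comp b c d h g) f;
  comp_id_l : forall a b (f : Hom a b), comp a b b (idm b) f = f;
  comp_id_r : forall a b (f : Hom a b), comp a a b f (idm a) = f
}.

Arguments Hom {_} _ _.
Arguments comp {_ x y z} _ _.
Arguments idm {_} _.

Notation "g ∘ f" := (comp g f) (at level 40, left associativity).

Record Functor (C D : Category) : Type := {
  fobj :> C -> D;
  fmap : forall a b : C, Hom a b -> Hom (fobj a) (fobj b);
  fmap_id : forall a : C, fmap a a (idm a) = idm (fobj a);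
  fmap_comp : forall a b c (g : Hom b c) (f : Hom a b),
      fmap a c (g ∘ f) = fmap b c g ∘ fmap a b f
}.

Arguments fmap {C D} _ {a b} _.

Section Basics.
Context {C : Category}.

Definition is_iso {a b : C} (f : Hom a b) : Prop :=
  exists g : Hom b a, g ∘ f = idm a /\ f ∘ g = idm b.

Definition is_initial (z : C) : Prop :=
  forall a : C, exists f : Hom z a, forall g : Hom z a, g = f.

Definition is_terminal (z : C) : Prop :=
  forall a : C, exists f : Hom a z, forall g : Hom a z, g = f.

Definition is_zero_obj (z : C) : Prop := is_initial z /\ is_terminal z.

Definition is_zero_mor {a b : C} (f : Hom a b) : Prop :=
  exists (z : C) (u : Hom a z) (v : Hom z b), is_zero_obj z /\ f = v ∘ u.

Definition is_pullback {A B X P : C} (f : Hom A X) (g : Hom B X)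
    (p1 : Hom P A) (p2 : Hom P B) : Prop :=
  f ∘ p1 = g ∘ p2 /\
  forall (T : C) (a : Hom T A) (b : Hom T B), f ∘ a = g ∘ b ->
    exists h : Hom T P, p1 ∘ h = a /\ p2 ∘ h = b /\
      forall h' : Hom T P, p1 ∘ h' = a -> p2 ∘ h' = b -> h' = h.

Definition is_pushout {A B X Q : C} (f : Hom X A) (g : Hom X B)
    (q1 : Hom A Q) (q2 : Hom B Q) : Prop :=
  q1 ∘ f = q2 ∘ g /\
  forall (T : C) (a : Hom A T) (b : Hom B T), a ∘ f = b ∘ g ->
    exists h : Hom Q T, h ∘ q1 = a /\ h ∘ q2 = b /\
      forall h' : Hom Q T, h' ∘ q1 = a -> h' ∘ q2 = b -> h' = h.

Definition is_coequalizer {R A Q : C} (u v : Hom R A) (q : Hom A Q) : Prop :=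
  q ∘ u = q ∘ v /\
  forall (T : C) (t : Hom A T), t ∘ u = t ∘ v ->
    exists h : Hom Q T, h ∘ q = t /\ forall h' : Hom Q T, h' ∘ q = t -> h' = h.

Definition is_regular_epi {A Q : C} (q : Hom A Q) : Prop :=
  exists (R : C) (u v : Hom R A), is_coequalizer u v q.

Definition is_kernel {K A B : C} (kappa : Hom K A) (alpha : Hom A B) : Prop :=
  is_zero_mor (alpha ∘ kappa) /\
  forall (T : C) (f : Hom T A), is_zero_mor (alpha ∘ f) ->
    exists g : Hom T K, kappa ∘ g = f /\
      forall g' : Hom T K, kappa ∘ g' = f -> g' = g.

Definition jointly_monic {R X : C} (r1 r2 : Hom R X) : Prop :=
  forall (T : C) (a b : Hom T R), r1 ∘ a = r1 ∘ b -> r2 ∘ a = r2 ∘ b -> a = b.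

Definition is_equiv_rel {R X : C} (r1 r2 : Hom R X) : Prop :=
  jointly_monic r1 r2 /\
  forall T : C,
    let rel := fun a b : Hom T X => exists h : Hom T R, r1 ∘ h = a /\ r2 ∘ h = b in
    (forall a, rel a a) /\ (forall a b, rel a b -> rel b a) /\
    (forall a b c, rel a b -> rel b c -> rel a c).

Definition is_effective {R X : C} (r1 r2 : Hom R X) : Prop :=
  exists (Y : C) (f : Hom X Y), is_pullback f f r1 r2.

Definition is_split_ext {K A B : C} (kappa : Hom K A) (alpha : Hom A B)
    (beta : Hom B A) : Prop :=
  alpha ∘ beta = idm B /\ is_kernel kappa alpha.

End Basics.


Definition pointed (C : Category) : Prop := exists z : C, is_zero_obj z.

Definition finitely_complete (C : Category) : Prop :=
  (exists t : C, is_terminal t) /\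
  forall (A B X : C) (f : Hom A X) (g : Hom B X),
    exists (P : C) (p1 : Hom P A) (p2 : Hom P B), is_pullback f g p1 p2.

Definition finitely_cocomplete (C : Category) : Prop :=
  (exists i : C, is_initial i) /\
  forall (A B X : C) (f : Hom X A) (g : Hom X B),
    exists (Q : C) (q1 : Hom A Q) (q2 : Hom B Q), is_pushout f g q1 q2.

Definition regular (C : Category) : Prop :=
  finitely_complete C /\
  (forall (A B P : C) (f : Hom A B) (p1 p2 : Hom P A),
      is_pullback f f p1 p2 -> exists (Q : C) (q : Hom A Q), is_coequalizer p1 p2 q) /\
  (forall (A B X P : C) (f : Hom A X) (g : Hom B X) (p1 : Hom P A) (p2 : Hom P B),
      is_pullback f g p1 p2 -> is_regular_epi f -> is_regular_epi p2).

Definition barr_exact (C : Category) : Prop :=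
  regular C /\
  forall (R X : C) (r1 r2 : Hom R X), is_equiv_rel r1 r2 -> is_effective r1 r2.

(* Bourn-protomodularity, in its standard form for pointed finitely complete
   categories: the split short five lemma. *)
Definition protomodular_pointed (C : Category) : Prop :=
  forall (K A B K' A' B' : C)
         (kappa : Hom K A) (alpha : Hom A B) (beta : Hom B A)
         (kappa' : Hom K' A') (alpha' : Hom A' B') (beta' : Hom B' A')
         (u : Hom K K') (v : Hom A A') (w : Hom B B'),
    is_split_ext kappa alpha beta -> is_split_ext kappa' alpha' beta' ->
    kappa' ∘ u = v ∘ kappa -> alpha' ∘ v = w ∘ alpha -> v ∘ beta = beta' ∘ w ->
    is_iso u -> is_iso w -> is_iso v.

Definition semi_abelian (C : Category) : Prop :=
  pointed C /\ finitely_complete C /\ finitely_cocomplete C /\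
  barr_exact C /\ protomodular_pointed C.

Definition is_generic_split_ext {C : Category} {X A B : C}
    (kappa : Hom X A) (alpha : Hom A B) (beta : Hom B A) : Prop :=
  is_split_ext kappa alpha beta /\
  forall (A' B' : C) (kappa' : Hom X A') (alpha' : Hom A' B') (beta' : Hom B' A'),
    is_split_ext kappa' alpha' beta' ->
    exists (f : Hom A' A) (g : Hom B' B),
      (f ∘ kappa' = kappa /\ alpha ∘ f = g ∘ alpha' /\ f ∘ beta' = beta ∘ g) /\
      forall (f' : Hom A' A) (g' : Hom B' B),
        f' ∘ kappa' = kappa -> alpha ∘ f' = g' ∘ alpha' -> f' ∘ beta' = beta ∘ g' ->
        f' = f /\ g' = g.

Definition has_generic_split_exts (C : Category) : Prop :=
  forall X : C, exists (A B : C) (kappa : Hom X A) (alpha : Hom A B) (beta : Hom B A),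
    is_generic_split_ext kappa alpha beta.

Definition full {C D : Category} (F : Functor C D) : Prop :=
  forall (a b : C) (g : Hom (F a) (F b)), exists f : Hom a b, fmap F f = g.

Definition faithful {C D : Category} (F : Functor C D) : Prop :=
  forall (a b : C) (f f' : Hom a b), fmap F f = fmap F f' -> f = f'.

Definition protoadditive {C D : Category} (F : Functor C D) : Prop :=
  forall (K A B : C) (kappa : Hom K A) (alpha : Hom A B) (beta : Hom B A),
    is_split_ext kappa alpha beta ->
    is_split_ext (fmap F kappa) (fmap F alpha) (fmap F beta).

Definition adjunction {C D : Category} (F : Functor C D) (G : Functor D C) : Prop :=
  exists (eta : forall a : C, Hom a (G (F a)))
         (eps : forall b : D, Hom (F (G b)) b),
    (forall (a a' : C) (f : Hom a a'), fmap G (fmap F f) ∘ eta a = eta a' ∘ f) /\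
    (forall (b b' : D) (g : Hom b b'), g ∘ eps b = eps b' ∘ fmap F (fmap G g)) /\
    (forall a : C, eps (F a) ∘ fmap F (eta a) = idm (F a)) /\
    (forall b : D, fmap G (eps b) ∘ eta (G b) = idm (G b)).

(* Main.v *)
Require Import Defs.

Lemma zero_mor_post {C : Category} {a b c : C} (f : Hom a b) (g : Hom b c) :
  is_zero_mor f -> is_zero_mor (g ∘ f).
Proof.
  intros [z [u [v [Hz ->]]]]. exists z, u, (g ∘ v). split; auto. apply comp_assoc.
Qed.

Lemma zero_mor_pre {C : Category} {a b c : C} (f : Hom b c) (h : Hom a b) :
  is_zero_mor f -> is_zero_mor (f ∘ h).
Proof.
  intros [z [u [v [Hz ->]]]]. exists z, (u ∘ h), v. split; auto.
  symmetry. apply comp_assoc.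
Qed.

Lemma terminal_zero {C : Category} (t : C) :
  pointed C -> is_terminal t -> is_zero_obj t.
Proof.
  intros [z [zi zt]] Ht. split; auto. intro a.
  destruct (Ht z) as [r _]. destruct (zt t) as [s _].
  destruct (zi a) as [za Hza].
  assert (E : r ∘ s = idm t).
  { destruct (Ht t) as [i Hi]. rewrite (Hi (r ∘ s)), (Hi (idm t)). reflexivity. }
  exists (za ∘ s). intro g.
  rewrite <- (comp_id_r _ _ _ g), <- E, comp_assoc, (Hza (g ∘ r)). reflexivity.
Qed.

Lemma initial_zero {C : Category} (i : C) :
  pointed C -> is_initial i -> is_zero_obj i.
Proof.
  intros [z [zi zt]] Hi. split; auto. intro a.
  destruct (Hi z) as [s _]. destruct (zi i) as [r _].
  destruct (zt a) as [az Haz].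
  assert (E : r ∘ s = idm i).
  { destruct (Hi i) as [j Hj]. rewrite (Hj (r ∘ s)), (Hj (idm i)). reflexivity. }
  exists (r ∘ az). intro g.
  rewrite <- (comp_id_l _ _ _ g), <- E, <- comp_assoc, (Haz (s ∘ g)). reflexivity.
Qed.

Theorem proposition2p9 (X Y : Category) (I : Functor X Y) (R : Functor Y X) :
  semi_abelian X -> semi_abelian Y ->
  full I -> faithful I -> protoadditive I -> adjunction I R ->
  has_generic_split_exts Y -> has_generic_split_exts X.
Proof.
  intros SX SY Hfull Hfaith Hpa Hadj Hgen x.
  destruct SX as [PX _]. destruct SY as [PY _].
  destruct Hadj as [eta [eps [Heta [Heps [T1 T2]]]]].
  assert (back : forall a b (h : Hom a (R b)), fmap R (eps b ∘ fmap I h) ∘ eta a = h).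
  { intros. rewrite fmap_comp, <- comp_assoc, Heta, comp_assoc, T2, comp_id_l.
    reflexivity. }
  assert (forth : forall a b (h : Hom (I a) b), eps b ∘ fmap I (fmap R h ∘ eta a) = h).
  { intros. rewrite fmap_comp, comp_assoc, <- Heps, <- comp_assoc, T1, comp_id_r.
    reflexivity. }
  assert (Rz : forall z : Y, is_zero_obj z -> is_zero_obj (R z)).
  { intros z [zi zt]. apply terminal_zero; auto. intro a.
    destruct (zt (I a)) as [u Hu]. exists (fmap R u ∘ eta a). intro g.
    rewrite <- (back _ _ g). rewrite (Hu (eps z ∘ fmap I g)). reflexivity. }
  assert (Iz : forall z : X, is_zero_obj z -> is_zero_obj (I z)).
  { intros z [zi zt]. apply initial_zero; auto. intro b.
    destruct (zi (R b)) as [u Hu]. exists (eps b ∘ fmap I u). intro g.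
    rewrite <- (forth _ _ g), (Hu (fmap R g ∘ eta z)). reflexivity. }
  assert (Rzm : forall a b (f : Hom a b), is_zero_mor f -> is_zero_mor (fmap R f)).
  { intros a b f [z [u [v [Hz ->]]]]. exists (R z), (fmap R u), (fmap R v).
    split; [auto | apply fmap_comp]. }
  assert (Izm : forall a b (f : Hom a b), is_zero_mor f -> is_zero_mor (fmap I f)).
  { intros a b f [z [u [v [Hz ->]]]]. exists (I z), (fmap I u), (fmap I v).
    split; [auto | apply fmap_comp]. }
  destruct (Hgen (I x)) as [A [B [k [al [be [[Hab [Hk0 Hku]] Huniv]]]]]].
  assert (key : forall T (g : Hom T x),
             eps A ∘ fmap I ((fmap R k ∘ eta x) ∘ g) = k ∘ fmap I g).
  { intros. rewrite fmap_comp, comp_assoc, forth. reflexivity. }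
  exists (R A), (R B), (fmap R k ∘ eta x), (fmap R al), (fmap R be).
  split.
  - split.
    + rewrite <- fmap_comp, Hab, fmap_id. reflexivity.
    + split.
      * rewrite comp_assoc, <- fmap_comp. apply zero_mor_pre. apply Rzm. exact Hk0.
      * intros T f Hf.
        assert (Hz : is_zero_mor (al ∘ (eps A ∘ fmap I f))).
        { rewrite comp_assoc, Heps, <- comp_assoc, <- fmap_comp.
          apply zero_mor_post. apply Izm. exact Hf. }
        destruct (Hku (I T) _ Hz) as [g0 [Hg0 Hg0u]].
        destruct (Hfull T x g0) as [g Hg].
        exists g. split.
        -- transitivity (fmap R (eps A ∘ fmap I ((fmap R k ∘ eta x) ∘ g)) ∘ eta T).
           ++ symmetry; apply back.
           ++ rewrite key, Hg, Hg0. apply back.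
        -- intros g' Hg'. apply Hfaith. rewrite Hg. apply Hg0u.
           rewrite <- key, Hg'. reflexivity.
  - intros A' B' k' al' be' Hs'.
    pose proof (Hpa _ _ _ _ _ _ Hs') as HIs.
    destruct (Huniv _ _ _ _ _ HIs) as [F [G [[E1 [E2 E3]] HU]]].
    exists (fmap R F ∘ eta A'), (fmap R G ∘ eta B'). split.
    + split; [|split].
      * rewrite <- comp_assoc, <- Heta, comp_assoc, <- fmap_comp, E1. reflexivity.
      * rewrite comp_assoc, <- fmap_comp, E2, fmap_comp, <- (comp_assoc _ _ _ _ _ (fmap R G)), Heta, comp_assoc.
        reflexivity.
      * rewrite <- comp_assoc, <- Heta, comp_assoc, <- fmap_comp, E3, fmap_comp, comp_assoc.
        reflexivity.
    + intros f' g' H1 H2 H3.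
      destruct (HU (eps A ∘ fmap I f') (eps B ∘ fmap I g')) as [U1 U2].
      * rewrite <- comp_assoc, <- fmap_comp, H1, forth. reflexivity.
      * rewrite comp_assoc, Heps, <- comp_assoc, <- fmap_comp, H2, fmap_comp, comp_assoc.
        reflexivity.
      * rewrite <- comp_assoc, <- fmap_comp, H3, fmap_comp, comp_assoc, <- Heps, <- comp_assoc.
        reflexivity.
      * split.
        -- rewrite <- U1. symmetry; apply back.
        -- rewrite <- U2. symmetry; apply back.
Qed.
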